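(* Let $\Sigma$ be a compact oriented surface with boundary components $\gamma_1,\dots,\gamma_n$ and $\chi(\Sigma)<0$, with a hyperbolic metric $d$ with geodesic boundary, a weight $\mathbf{r}\in\mathbb{R}^n_{>0}$ and a truncated triangulation $\mathcal{T}$. For a truncated hinge $\Diamond_{ij;kl}$ (edge $e_{ij}$ with faces $f_{ijk},f_{ijl}$), put $p=r_k,q=r_i,r=r_l,s=r_j$ and $a=\cosh l_{ki}$, $b=\cosh l_{il}$, $c=\cosh l_{lj}$, $d=\cosh l_{jk}$, $e=\cosh l_{ij}$, where $l_{\alpha\beta}$ is the length coordinate of $[d]$ at $e_{\alpha\beta}$. Then $e_{ij}$ is local weighted Delaunay if and only if \[\frac{\sqrt{\Delta_{bce}}}{p}+\frac{\sqrt{\Delta_{ade}}}{r}\le\frac{\sqrt{\Delta_{cdf}}}{q}+\frac{\sqrt{\Delta_{abf}}}{s},\] where $\Delta_{xyz}=x^2+y^2+z^2+2xyz-1$ and $f=\frac{ab+cd+ace+bde+\sqrt{\Delta_{ade}}\sqrt{\Delta_{bce}}}{e^2-1}$.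
   Context: Gluing open disks $D_i$ to the boundary components $\gamma_i$ and choosing $v_i\in D_i$ gives a marked surface $(S,V)$; a truncated triangulation of $\Sigma$ is the intersection with $\Sigma$ of a triangulation of $(S,V)$ (a $\Delta$-complex decomposition with $0$-cells $V$); each face becomes a truncated triangle (right-angled hexagon after straightening). For each edge, the truncated arc is isotopic to a unique geodesic orthogonal to $\partial\Sigma$, whose length is the length coordinate. For a truncated face $f_{ijk}$, lifted to $\mathbb{H}^2$, $O_{ijk}$ denotes the point satisfying $r_i\sinh d(O_{ijk},\gamma_i)=r_j\sinh d(O_{ijk},\gamma_j)=r_k\sinh d(O_{ijk},\gamma_k)$, and $h_{ij,k}$ is the hyperbolic distance from $O_{ijk}$ to the geodesic edge $e_{ij}$, positive if $O_{ijk}$ lies on the same side of $e_{ij}$ as $f_{ijk}$ and negative otherwise. The edge $e_{ij}$ is local weighted Delaunay if $h_{ij,k}+h_{ij,l}\ge0$. *)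

(* Defs.v *)
(* Hyperbolic plane in the hyperboloid (Minkowski) model:
   R^{2,1} with <x,y> = x1 y1 + x2 y2 - x3 y3,
   H^2 = { x | <x,x> = -1, x3 > 0 },
   a geodesic line is { x in H^2 | <x,n> = 0 } for a unit spacelike normal n
   (<n,n> = 1); the normal n also orients the line: its "positive side" is
   { x | <x,n> > 0 }. *)
From Stdlib Require Import Reals.
Open Scope R_scope.

Record pt := Pt { px : R; py : R; pz : R }.

Definition mink (x y : pt) : R := px x * px y + py x * py y - pz x * pz y.

Definition popp (x : pt) : pt := Pt (- px x) (- py x) (- pz x).

Definition H2 (x : pt) : Prop := mink x x = -1 /\ 0 < pz x.

Definition unit_spacelike (n : pt) : Prop := mink n n = 1.

Definition on_geod (n x : pt) : Prop := H2 x /\ mink x n = 0.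

Definition arccosh (c : R) : R := ln (c + sqrt (c ^ 2 - 1)).
Definition hdist (x y : pt) : R := arccosh (- mink x y).

Definition geod_perp (m n : pt) : Prop := mink m n = 0.

Definition dist_to_geod (x n : pt) (d : R) : Prop :=
  (exists y, on_geod n y /\ hdist x y = d) /\
  (forall y, on_geod n y -> d <= hdist x y).

Definition signed_dist (x n : pt) (s : R) : Prop :=
  exists d, dist_to_geod x n d /\
    s = (if Rle_dec 0 (mink x n) then d else - d).

Definition perp_length (n1 n2 : pt) (l : R) : Prop :=
  exists P Q mm : pt,
    on_geod n1 P /\ on_geod n2 Q /\ unit_spacelike mm /\
    on_geod mm P /\ on_geod mm Q /\ geod_perp mm n1 /\ geod_perp mm n2 /\
    l = hdist P Q.

(* A lifted truncated triangle f_ijk: three boundary geodesic lines gamma_i,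
   gamma_j, gamma_k (normals oriented towards the face, i.e. the face lies in
   { <.,n_a> >= 0 } for a = i,j,k), pairwise disjoint and each lying strictly
   on the face side of the two others.  The face is then the right-angled
   hexagon bounded by these three lines and their common perpendiculars. *)
Definition trunc_face (ni nj nk : pt) : Prop :=
  unit_spacelike ni /\ unit_spacelike nj /\ unit_spacelike nk /\
  (forall x, on_geod nj x -> 0 < mink x ni) /\
  (forall x, on_geod nk x -> 0 < mink x ni) /\
  (forall x, on_geod ni x -> 0 < mink x nj) /\
  (forall x, on_geod nk x -> 0 < mink x nj) /\
  (forall x, on_geod ni x -> 0 < mink x nk) /\
  (forall x, on_geod nj x -> 0 < mink x nk).

(* A lifted truncated hinge Diamond_{ij;kl}: faces f_ijk and f_ijl sharing the
   edge e_ij, whose geodesic line (normal m) is the common perpendicular of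
   gamma_i and gamma_j; m is oriented towards f_ijk (gamma_k on its positive
   side) and f_ijl lies on the other side (gamma_l on its negative side). *)
Definition trunc_hinge (ni nj nk nl m : pt) : Prop :=
  trunc_face ni nj nk /\ trunc_face ni nj nl /\
  unit_spacelike m /\ geod_perp m ni /\ geod_perp m nj /\
  (forall x, on_geod nk x -> 0 < mink x m) /\
  (forall x, on_geod nl x -> mink x m < 0).

Definition weighted_center (O ni nj nk : pt) (ri rj rk : R) : Prop :=
  H2 O /\ exists di dj dk : R,
    signed_dist O ni di /\ signed_dist O nj dj /\ signed_dist O nk dk /\
    ri * sinh di = rj * sinh dj /\ rj * sinh dj = rk * sinh dk.

(* e_ij is local weighted Delaunay: h_{ij,k} + h_{ij,l} >= 0, where h_{ij,k}
   (resp. h_{ij,l}) is the signed distance from O_ijk (resp. O_ijl) to the line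
   e_ij, positive on the side of f_ijk (resp. f_ijl). *)
Definition local_weighted_delaunay (m Ok Ol : pt) : Prop :=
  exists hk hl : R,
    signed_dist Ok m hk /\ signed_dist Ol (popp m) hl /\ 0 <= hk + hl.

Definition DeltaXYZ (x y z : R) : R := x ^ 2 + y ^ 2 + z ^ 2 + 2 * x * y * z - 1.

(* Main.v *)
Require Import Defs.
From Stdlib Require Import Reals Lra Psatz.
Open Scope R_scope.

Lemma sq_le_aux u v : 0 < u -> v^2 <= u^2 -> v <= u.
Proof.
  intros hu h. destruct (Rle_dec v u); auto. exfalso.
  assert (u < v) by lra. assert (u*u < v*v) by (apply Rmult_le_0_lt_compat; lra). nra.
Qed.

Lemma H2_inner x y : H2 x -> H2 y -> mink x y <= -1.
Proof.
  destruct x as [x1 x2 x3], y as [y1 y2 y3]; unfold H2, mink; simpl.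
  intros [hx px] [hy py].
  assert (hx' : x3^2 = 1 + x1^2 + x2^2) by lra.
  assert (hy' : y3^2 = 1 + y1^2 + y2^2) by lra.
  assert (E : (x3*y3)^2 - (1 + (x1*y1+x2*y2))^2 = (x1-y1)^2 + (x2-y2)^2 + (x1*y2-x2*y1)^2).
  { replace ((x3*y3)^2) with (x3^2*y3^2) by ring. rewrite hx', hy'. ring. }
  assert (0 < x3*y3) by (apply Rmult_lt_0_compat; lra).
  pose proof (pow2_ge_0 (x1-y1)); pose proof (pow2_ge_0 (x2-y2)); pose proof (pow2_ge_0 (x1*y2-x2*y1)).
  assert (1 + (x1*y1+x2*y2) <= x3*y3) by (apply sq_le_aux; lra).
  lra.
Qed.

Lemma future_of x v : H2 x -> mink v v = -1 -> mink x v < 0 -> 0 < pz v.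
Proof.
  intros Hx Hv Hxv.
  destruct (Rtotal_order 0 (pz v)) as [h|[h|h]]; auto.
  - exfalso. destruct v as [v1 v2 v3]; unfold mink in Hv; simpl in *. subst. nra.
  - exfalso. assert (H2 (popp v)). { destruct v; unfold H2, popp, mink in *; simpl in *. split; lra. }
    pose proof (H2_inner _ _ Hx H). destruct v, x; unfold popp, mink in *; simpl in *. lra.
Qed.

Lemma rev_cs z y : mink y y < 0 -> mink z z * mink y y <= (mink z y)^2.
Proof.
  destruct z as [z1 z2 z3], y as [y1 y2 y3]; unfold mink; simpl. intros h.
  set (w1 := y3*z1 - z3*y1). set (w2 := y3*z2 - z3*y2).
  set (D := (z1*y1+z2*y2-z3*y3)^2 - (z1*z1+z2*z2-z3*z3)*(y1*y1+y2*y2-y3*y3)).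
  assert (E : y3^2 * D = (w1^2+w2^2)*(y3^2 - y1^2 - y2^2) + (w1*y1+w2*y2)^2) by (unfold D, w1, w2; ring).
  assert (y3 <> 0) by (intro; subst; nra).
  assert (0 < y3^2) by (pose proof (Rsqr_pos_lt y3 H); unfold Rsqr in *; nra).
  assert (0 <= (w1^2+w2^2)*(y3^2 - y1^2 - y2^2) + (w1*y1+w2*y2)^2) by
    (apply Rplus_le_le_0_compat; [apply Rmult_le_pos; nra | apply pow2_ge_0]).
  assert (0 <= D) by nra.
  unfold D in *. lra.
Qed.

Lemma arccosh_aux c : 1 <= c ->
  let s := sqrt (c^2-1) in 0 <= s /\ s*s = c^2-1 /\ 1 <= c + s.
Proof.
  intros h s. assert (0 <= c^2-1) by nra.
  split; [apply sqrt_pos|]. split; [apply sqrt_sqrt; auto|]. pose proof (sqrt_pos (c^2-1)). unfold s. lra.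
Qed.

Lemma cosh_arccosh c : 1 <= c -> cosh (arccosh c) = c.
Proof.
  intros h. destruct (arccosh_aux c h) as (h1 & h2 & h3).
  unfold cosh, arccosh. rewrite exp_Ropp, exp_ln by lra.
  set (s := sqrt (c^2-1)) in *. assert (s^2 = c^2-1) by (simpl; lra). field_simplify_eq; [|lra]. nra.
Qed.

Lemma sinh_arccosh c : 1 <= c -> sinh (arccosh c) = sqrt (c^2-1).
Proof.
  intros h. destruct (arccosh_aux c h) as (h1 & h2 & h3).
  unfold sinh, arccosh. rewrite exp_Ropp, exp_ln by lra.
  set (s := sqrt (c^2-1)) in *. assert (s^2 = c^2-1) by (simpl; lra). field_simplify_eq; [|lra]. nra.
Qed.

Lemma arccosh_le c1 c2 : 1 <= c1 -> c1 <= c2 -> arccosh c1 <= arccosh c2.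
Proof.
  intros h1 h2. destruct (arccosh_aux c1 h1) as (a1 & a2 & a3).
  unfold arccosh.
  assert (sqrt (c1^2-1) <= sqrt (c2^2-1)) by (apply sqrt_le_1_alt; nra).
  destruct (Req_dec (c1 + sqrt (c1^2-1)) (c2 + sqrt (c2^2-1))) as [e|e].
  - rewrite e; lra.
  - left. apply ln_increasing; lra.
Qed.

Lemma sinh_opp x : sinh (- x) = - sinh x.
Proof. unfold sinh. rewrite Ropp_involutive. field. Qed.

Lemma sinh_le x y : sinh x <= sinh y <-> x <= y.
Proof.
  split; intro h.
  - destruct (Rle_dec x y); auto. pose proof (sinh_lt y x ltac:(lra)). lra.
  - destruct (Req_dec x y). subst; lra. left; apply sinh_lt; lra.
Qed.

Lemma sinh_inj x y : sinh x = sinh y -> x = y.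
Proof. intro h. apply Rle_antisym; apply sinh_le; lra. Qed.

Definition pcomb (a : R) (x : pt) (b : R) (y : pt) : pt :=
  Pt (a * px x + b * px y) (a * py x + b * py y) (a * pz x + b * pz y).

Lemma mink_comb_l a x b y z : mink (pcomb a x b y) z = a * mink x z + b * mink y z.
Proof. destruct x, y, z; unfold mink, pcomb; simpl; ring. Qed.
Lemma mink_comb_r a x b y z : mink z (pcomb a x b y) = a * mink z x + b * mink z y.
Proof. destruct x, y, z; unfold mink, pcomb; simpl; ring. Qed.
Lemma mink_sym x y : mink x y = mink y x.
Proof. unfold mink; ring. Qed.
Lemma mink_popp_r x y : mink x (popp y) = - mink x y.
Proof. destruct x, y; unfold mink, popp; simpl; ring. Qed.

Lemma sqrt1t t : let c := sqrt (1 + t^2) in 1 <= c /\ c*c = 1 + t^2 /\ sqrt (c^2 - 1) = Rabs t.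
Proof.
  intro c. assert (0 <= t^2) by apply pow2_ge_0.
  assert (cc : c*c = 1+t^2) by (apply sqrt_sqrt; lra).
  split; [|split; auto].
  - unfold c. apply Rle_trans with (sqrt 1); [rewrite sqrt_1; lra | apply sqrt_le_1_alt; lra].
  - replace (c^2-1) with (Rabs t ^2) by (rewrite pow2_abs; replace (c^2) with (c*c) by ring; lra).
    apply sqrt_pow2, Rabs_pos.
Qed.

Lemma dist_geod_lb x n y : H2 x -> unit_spacelike n -> on_geod n y ->
  sqrt (1 + (mink x n)^2) <= - mink x y.
Proof.
  intros Hx Hn [Hy Hyn]. set (t := mink x n).
  destruct (sqrt1t t) as (c1 & cc & _). set (c := sqrt (1 + t^2)) in *.
  pose proof (rev_cs (pcomb 1 x (-t) n) y ltac:(destruct Hy; lra)) as R1.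
  rewrite !mink_comb_l, !mink_comb_r in R1.
  pose proof (H2_inner x y Hx Hy) as I.
  destruct Hx as [Hxx _]. destruct Hy as [Hyy _]. unfold unit_spacelike in Hn.
  rewrite (mink_sym n x) in R1. fold t in R1. rewrite (mink_sym n y), Hyn in R1. rewrite Hxx, Hn, Hyy in R1.
  apply sq_le_aux; [lra|]. replace (c^2) with (c*c) by ring. rewrite cc. nra.
Qed.

Lemma foot_point x n : H2 x -> unit_spacelike n ->
  exists y, on_geod n y /\ - mink x y = sqrt (1 + (mink x n)^2).
Proof.
  intros Hx Hn. set (t := mink x n).
  destruct (sqrt1t t) as (c1 & cc & _). set (c := sqrt (1 + t^2)) in *.
  exists (pcomb (1/c) x (-t/c) n).
  pose proof Hx as [Hxx _]. unfold unit_spacelike in Hn.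
  assert (E1 : mink x (pcomb (1/c) x (-t/c) n) = - c).
  { rewrite mink_comb_r, Hxx. fold t. field_simplify_eq; [|lra]. nra. }
  split; [|lra].
  split; [split|].
  - rewrite !mink_comb_l, !mink_comb_r, Hxx, Hn, (mink_sym n x). fold t. field_simplify_eq; [|lra]. nra.
  - apply (future_of x); auto; [| lra].
    rewrite !mink_comb_l, !mink_comb_r, Hxx, Hn, (mink_sym n x). fold t. field_simplify_eq; [|lra]. nra.
  - rewrite mink_comb_l, Hn. fold t. field; lra.
Qed.

Lemma dist_to_geod_val x n d : H2 x -> unit_spacelike n -> dist_to_geod x n d ->
  d = arccosh (sqrt (1 + (mink x n)^2)).
Proof.
  intros Hx Hn [[y [Hy Hd]] Hmin].
  destruct (sqrt1t (mink x n)) as (c1 & _ & _).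
  destruct (foot_point x n Hx Hn) as [y0 [Hy0 E0]].
  pose proof (Hmin y0 Hy0) as L. unfold hdist in L. rewrite E0 in L.
  pose proof (dist_geod_lb x n y Hx Hn Hy) as L2.
  unfold hdist in Hd. pose proof (arccosh_le _ _ c1 L2). lra.
Qed.

Lemma dist_to_geod_ex x n : H2 x -> unit_spacelike n ->
  dist_to_geod x n (arccosh (sqrt (1 + (mink x n)^2))).
Proof.
  intros Hx Hn. destruct (sqrt1t (mink x n)) as (c1 & _ & _).
  destruct (foot_point x n Hx Hn) as [y0 [Hy0 E0]]. split.
  - exists y0. split; auto. unfold hdist. rewrite E0. auto.
  - intros y Hy. unfold hdist. apply arccosh_le; auto. apply dist_geod_lb; auto.
Qed.

Lemma signed_dist_sinh x n s : H2 x -> unit_spacelike n -> signed_dist x n s -> sinh s = mink x n.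
Proof.
  intros Hx Hn [d [Hd Hs]]. rewrite (dist_to_geod_val x n d Hx Hn Hd) in Hs.
  destruct (sqrt1t (mink x n)) as (c1 & _ & E).
  destruct (Rle_dec 0 (mink x n)); subst s.
  - rewrite sinh_arccosh, E by auto. apply Rabs_pos_eq; auto.
  - rewrite sinh_opp, sinh_arccosh, E by auto. rewrite Rabs_left; lra.
Qed.

Lemma signed_dist_ex x n : H2 x -> unit_spacelike n -> exists s, signed_dist x n s.
Proof.
  intros Hx Hn. eexists. exists (arccosh (sqrt (1 + (mink x n)^2))). split.
  apply dist_to_geod_ex; auto. reflexivity.
Qed.

Lemma gram3 (u1 u2 u3 x y : pt) :
  let g11 := mink u1 u1 in let g22 := mink u2 u2 in let g33 := mink u3 u3 in
  let g12 := mink u1 u2 in let g13 := mink u1 u3 in let g23 := mink u2 u3 in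
  let p1 := mink x u1 in let p2 := mink x u2 in let p3 := mink x u3 in
  let q1 := mink y u1 in let q2 := mink y u2 in let q3 := mink y u3 in
  let A11 := g22*g33 - g23^2 in let A22 := g11*g33 - g13^2 in let A33 := g11*g22 - g12^2 in
  let A12 := g13*g23 - g12*g33 in let A13 := g12*g23 - g13*g22 in let A23 := g12*g13 - g11*g23 in
  (g11*A11 + g12*A12 + g13*A13) * mink x y =
  A11*p1*q1 + A22*p2*q2 + A33*p3*q3 + A12*(p1*q2+p2*q1) + A13*(p1*q3+p3*q1) + A23*(p2*q3+p3*q2).
Proof.
  destruct u1, u2, u3, x, y; unfold mink; simpl. ring.
Qed.

Lemma gram_special u1 u2 u3 x y g11 g12 g22 g33 :
  mink u1 u1 = g11 -> mink u1 u2 = g12 -> mink u2 u2 = g22 -> mink u3 u3 = g33 ->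
  mink u1 u3 = 0 -> mink u2 u3 = 0 ->
  g33*(g11*g22 - g12^2) * mink x y =
  g33*g22*(mink x u1)*(mink y u1) + g33*g11*(mink x u2)*(mink y u2)
  + (g11*g22 - g12^2)*(mink x u3)*(mink y u3)
  - g12*g33*((mink x u1)*(mink y u2) + (mink x u2)*(mink y u1)).
Proof.
  intros h1 h2 h3 h4 h5 h6. pose proof (gram3 u1 u2 u3 x y) as G. cbv zeta in G.
  rewrite h1, h2, h3, h4, h5, h6 in G.
  replace (g33*(g11*g22-g12^2)) with (g11*(g22*g33-0^2) + g12*(0*0-g12*g33) + 0*(g12*0-0*g22)) by ring. rewrite G. ring.
Qed.

Lemma perp_len_val n1 n2 l : unit_spacelike n1 -> unit_spacelike n2 ->
  (forall x, on_geod n2 x -> 0 < mink x n1) -> (forall x, on_geod n1 x -> 0 < mink x n2) ->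
  perp_length n1 n2 l -> mink n1 n2 = - cosh l /\ 1 < cosh l.
Proof.
  intros U1 U2 O21 O12 (P & Q & mm & HP & HQ & Um & HPm & HQm & Pm1 & Pm2 & Hl).
  assert (beta : 0 < mink Q n1) by auto.
  assert (pi : 0 < mink P n2) by auto.
  destruct HP as [HP HPn1]. destruct HQ as [HQ HQn2].
  destruct HPm as [_ HPmm]. destruct HQm as [_ HQmm].
  unfold geod_perp, unit_spacelike in *.
  pose proof (H2_inner P Q HP HQ) as IPQ.
  pose proof HP as [PP _]. pose proof HQ as [QQ _].
  assert (G : forall x y, mink x y = - mink x P * mink y P + mink x n1 * mink y n1 + mink x mm * mink y mm).
  { intros x y. pose proof (gram_special P n1 mm x y (-1) 0 1 1 PP HPn1 U1 Um HPmm ltac:(rewrite mink_sym; auto)) as G.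
    lra. }
  pose proof (G Q Q) as E1. pose proof (G Q n2) as E2. pose proof (G n2 n2) as E3.
  rewrite (mink_sym n2 mm), Pm2 in E3. rewrite HQmm in E1, E2. rewrite HQn2 in E2.
  rewrite QQ in E1. rewrite U2 in E3. rewrite (mink_sym n2 P) in E2, E3. rewrite (mink_sym n2 n1) in E2, E3.
  rewrite (mink_sym Q P) in E1, E2.
  set (q := mink P Q) in *. set (b := mink Q n1) in *. set (p := mink P n2) in *. set (g := mink n1 n2) in *.
  assert (Hbg : b*g = q*p) by lra.
  assert (gg : g*g = 1 + p*p) by lra.
  assert (qq : q*q = 1 + b*b) by lra.
  assert (X : b*b*(g*g) = (q*q)*(p*p)) by (replace (b*b*(g*g)) with ((b*g)*(b*g)) by ring; rewrite Hbg; ring).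
  rewrite gg, qq in X.
  assert (b*b = p*p) by lra.
  assert (Hbp : b = p).
  { apply Rle_antisym; apply sq_le_aux; simpl; lra. }
  assert (g = q). { apply (Rmult_eq_reg_l b); [|lra]. rewrite Hbg. rewrite Hbp. ring. }
  assert (cosh l = - q).
  { rewrite Hl. unfold hdist. apply cosh_arccosh. unfold q in *. lra. }
  split; [lra|]. nra.
Qed.

Lemma wc_pos O ni nj P ri rj : unit_spacelike ni -> unit_spacelike nj ->
  (forall x, on_geod nj x -> 0 < mink x ni) -> (forall x, on_geod ni x -> 0 < mink x nj) ->
  on_geod ni P -> H2 O -> 0 < ri -> 0 < rj -> ri * mink O ni = rj * mink O nj ->
  0 < ri * mink O ni.
Proof.
  intros Ui Uj Oji Oij HP HO hri hrj Eq.
  destruct (Rlt_dec 0 (ri * mink O ni)) as [h|h]; auto. exfalso.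
  assert (oi : mink O ni <= 0) by nra.
  assert (oj : mink O nj <= 0) by nra.
  destruct (Req_dec (mink O nj) 0) as [z|z].
  { pose proof (Oji O (conj HO z)). lra. }
  assert (pi : 0 < mink P nj) by auto.
  set (o := mink O nj) in *. set (p := mink P nj) in *.
  set (s := - o / (p - o)).
  assert (s0 : 0 < s) by (unfold s; apply Rdiv_lt_0_compat; lra).
  assert (s1 : s < 1) by (unfold s; apply (Rmult_lt_reg_r (p - o)); [lra|]; field_simplify; lra).
  set (v := pcomb (1-s) O s P).
  destruct HP as [HP HPi].
  pose proof (H2_inner O P HO HP) as IOP.
  pose proof HO as [OO Oz]. pose proof HP as [PP Pz].
  assert (vv : mink v v < 0).
  { unfold v. rewrite !mink_comb_l, !mink_comb_r, OO, PP, (mink_sym P O). assert (0 < (1-s)*s) by (apply Rmult_lt_0_compat; lra). assert ((1-s)*s*mink O P <= -((1-s)*s)) by nra. nra. }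
  assert (vz : 0 < pz v) by (unfold v, pcomb; simpl; nra).
  assert (vj : mink v nj = 0).
  { unfold v. rewrite mink_comb_l. fold o p. unfold s. field. lra. }
  assert (vi : mink v ni <= 0).
  { unfold v. rewrite mink_comb_l, HPi. nra. }
  set (N := sqrt (- mink v v)).
  assert (NN : N * N = - mink v v) by (apply sqrt_sqrt; lra).
  assert (N0 : 0 < N) by (apply sqrt_lt_R0; lra).
  set (y := pcomb (1/N) v 0 v).
  assert (Hy : on_geod nj y).
  { split; [split|].
    - unfold y. rewrite !mink_comb_l, !mink_comb_r. field_simplify_eq; [|lra]. nra.
    - unfold y, pcomb; simpl. apply Rplus_lt_le_0_compat; [|lra]. apply Rmult_lt_0_compat; auto. apply Rdiv_lt_0_compat; lra.
    - unfold y. rewrite mink_comb_l, vj. ring. }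
  pose proof (Oji y Hy) as C. unfold y in C. rewrite mink_comb_l in C.
  assert (0 < 1/N) by (apply Rdiv_lt_0_compat; lra). nra.
Qed.

Lemma tcmp t1 t2 D1 D2 : 0 < t1 -> 0 < t2 -> t1^2*D1 = 1 -> t2^2*D2 = 1 -> D2 < D1 -> t1 < t2.
Proof.
  intros h1 h2 e1 e2 d.
  assert (0 < D2). { destruct (Rlt_dec 0 D2); auto. assert (t2^2 > 0) by (simpl; nra). nra. }
  destruct (Rlt_dec t1 t2); auto. exfalso.
  assert (t2^2 <= t1^2) by (simpl; nra).
  assert (t1^2*D2 < t1^2*D1) by (apply Rmult_lt_compat_l; [simpl; nra|lra]).
  assert (t2^2*D2 <= t1^2*D2) by (apply Rmult_le_compat_r; lra).
  lra.
Qed.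

Lemma mono_strict t1 t2 X1 X2 k : 0 < t1 -> 0 < t2 -> t1^2*(k - X1^2) = 1 -> t2^2*(k - X2^2) = 1 ->
  X1 < X2 -> t1*X1 < t2*X2.
Proof.
  intros h1 h2 e1 e2 x.
  destruct (Rle_dec 0 X1) as [p1|p1].
  - assert (t1 < t2) by (apply (tcmp t1 t2 (k - X1^2) (k - X2^2)); auto; simpl; nra).
    assert (t1 * X1 <= t1 * X2) by (apply Rmult_le_compat_l; lra).
    assert (t1 * X2 < t2 * X2) by (apply Rmult_lt_compat_r; lra). lra.
  - destruct (Rle_dec X2 0) as [p2|p2].
    + assert (t2 < t1) by (apply (tcmp t2 t1 (k - X2^2) (k - X1^2)); auto; simpl; nra).
      assert (t2 * (-X2) <= t2 * (-X1)) by (apply Rmult_le_compat_l; lra).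
      assert (t2 * (-X1) < t1 * (-X1)) by (apply Rmult_lt_compat_r; lra). lra.
    + assert (t1*X1 < 0) by nra. assert (0 < t2*X2) by nra. lra.
Qed.

Lemma mono_iff t1 t2 X1 X2 k : 0 < t1 -> 0 < t2 -> t1^2*(k - X1^2) = 1 -> t2^2*(k - X2^2) = 1 ->
  (t2*X2 <= t1*X1 <-> X2 <= X1).
Proof.
  intros h1 h2 e1 e2. split; intro h.
  - destruct (Rle_dec X2 X1); auto. pose proof (mono_strict t1 t2 X1 X2 k h1 h2 e1 e2 ltac:(lra)). lra.
  - destruct (Req_dec X2 X1) as [z|z].
    + subst. assert (t1 = t2).
      { destruct (Rtotal_order t1 t2) as [l|[l|l]]; auto; exfalso.
        - assert (t1^2 < t2^2) by (simpl; nra). nra.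
        - assert (t2^2 < t1^2) by (simpl; nra). nra. }
      subst; lra.
    + left. apply (mono_strict t2 t1 X2 X1 k); auto; lra.
Qed.

Lemma final_alg (E S mk ml Lk Ll : R) : 0 < E -> 0 < S -> mk < 0 -> 0 < ml ->
  (Ll/(E*ml) <= Lk/(E*mk) <-> ml*S*Lk + (-mk*S)*Ll <= 0).
Proof.
  intros hE hS hk hl.
  assert (Id : Lk/(E*mk) - Ll/(E*ml) = (ml*S*Lk + (-mk*S)*Ll) / (E*mk*ml*S)) by (field; repeat split; lra).
  assert (den : E*mk*ml*S < 0).
  { assert (0 < E*ml*S) by (apply Rmult_lt_0_compat; [apply Rmult_lt_0_compat|]; lra).
    replace (E*mk*ml*S) with (mk*(E*ml*S)) by ring. nra. }
  assert (iv : / (E*mk*ml*S) < 0) by (apply Rinv_lt_0_compat; auto).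
  set (N := ml*S*Lk + (-mk*S)*Ll) in *. set (Dd := E*mk*ml*S) in *.
  unfold Rdiv at 3 in Id.
  split; intro h.
  - assert (0 <= N * / Dd) by lra. nra.
  - assert (0 <= N * / Dd) by nra. lra.
Qed.

Lemma center_alg (O n3 ni nj m : pt) (e ri rj r3 x3 y3 mu t : R) :
  (forall x y, (1 - e^2) * mink x y = mink x ni * mink y ni + mink x nj * mink y nj
     + (1 - e^2) * mink x m * mink y m + e * (mink x ni * mink y nj + mink x nj * mink y ni)) ->
  H2 O -> 0 < ri -> 0 < rj -> 0 < r3 -> 1 < e ->
  mink n3 ni = - x3 -> mink n3 nj = - y3 -> mink n3 m = mu -> mu <> 0 ->
  ri * mink O ni = t -> rj * mink O nj = t -> r3 * mink O n3 = t ->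
  let E := e^2 - 1 in
  let L := E / r3 - (x3 + e*y3)/ri - (y3 + e*x3)/rj in
  let X := L / (E*mu) in
  mink O m = t * X /\ t^2 * ((/ri^2 + /rj^2 + 2*e/(ri*rj))/E - X^2) = 1.
Proof.
  intros G HO hi hj h3 he E3i E3j E3m mu0 Ti Tj T3 E L X.
  assert (hE : 0 < E) by (unfold E; simpl; nra).
  assert (ui : mink O ni = t/ri) by (rewrite <- Ti; field; lra).
  assert (uj : mink O nj = t/rj) by (rewrite <- Tj; field; lra).
  assert (u3 : mink O n3 = t/r3) by (rewrite <- T3; field; lra).
  pose proof (G O n3) as H1. rewrite ui, uj, u3, E3i, E3j, E3m in H1.
  pose proof (G O O) as H2. destruct HO as [OO _]. rewrite ui, uj, OO in H2.
  set (g := mink O m) in *.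
  assert (K : g*mu*E = t*L).
  { unfold L, E. unfold Rdiv in *. replace (1 - e^2) with (- (e^2-1)) in H1 by ring. lra. }
  assert (Hg : g = t*X).
  { unfold X. apply (Rmult_eq_reg_r (mu*E)); [|apply Rmult_integral_contrapositive; split; lra].
    replace (t * (L / (E*mu)) * (mu*E)) with (t*L) by (field; split; lra). rewrite <- K. ring. }
  split; auto.
  rewrite Hg in H2. fold E in hE.
  replace (1 - e^2) with (- E) in H2 by (unfold E; ring).
  unfold Rdiv in *.
  set (pi := / ri) in *. set (pj := / rj) in *.
  replace (/ ri ^2) with (pi^2) by (unfold pi; field; lra).
  replace (/ rj ^2) with (pj^2) by (unfold pj; field; lra).
  replace (/ (ri*rj)) with (pi*pj) by (unfold pi, pj; field; lra).
  apply (Rmult_eq_reg_l E); [|lra].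
  replace (E * (t ^ 2 * ((pi ^ 2 + pj ^ 2 + 2 * e * (pi * pj)) * / E - X ^ 2))) with
     (t ^ 2 * (pi ^ 2 + pj ^ 2 + 2 * e * (pi * pj)) - E * (t*X)^2) by (field; lra).
  lra.
Qed.

Theorem lemma4p9 (ni nj nk nl m : pt) (ri rj rk rl : R)
    (lki lil llj ljk lij : R) (Ok Ol : pt) :
  trunc_hinge ni nj nk nl m ->
  0 < ri -> 0 < rj -> 0 < rk -> 0 < rl ->
  perp_length nk ni lki -> perp_length ni nl lil ->
  perp_length nl nj llj -> perp_length nj nk ljk ->
  perp_length ni nj lij ->
  weighted_center Ok ni nj nk ri rj rk ->
  weighted_center Ol ni nj nl ri rj rl ->
  let p := rk in let q := ri in let r := rl in let s := rj in
  let a := cosh lki in let b := cosh lil in let c := cosh llj in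
  let d := cosh ljk in let e := cosh lij in
  let f := (a * b + c * d + a * c * e + b * d * e
            + sqrt (DeltaXYZ a d e) * sqrt (DeltaXYZ b c e)) / (e ^ 2 - 1) in
  (local_weighted_delaunay m Ok Ol <->
   sqrt (DeltaXYZ b c e) / p + sqrt (DeltaXYZ a d e) / r
     <= sqrt (DeltaXYZ c d f) / q + sqrt (DeltaXYZ a b f) / s).
Proof.
  intros Hh hri hrj hrk hrl Pki Pil Plj Pjk Pij Wk Wl p q r s a b c d e f.
  destruct Hh as (Fk & Fl & Um & Pmi & Pmj & Hmk & Hml).
  destruct Fk as (Ui & Uj & Uk & Fk1 & Fk2 & Fk3 & Fk4 & Fk5 & Fk6).
  destruct Fl as (_ & _ & Ul & Fl1 & Fl2 & Fl3 & Fl4 & Fl5 & Fl6).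
  destruct (perp_len_val nk ni lki Uk Ui Fk5 Fk2 Pki) as [Eki a1].
  destruct (perp_len_val ni nl lil Ui Ul Fl2 Fl5 Pil) as [Eil b1].
  destruct (perp_len_val nl nj llj Ul Uj Fl6 Fl4 Plj) as [Elj c1].
  destruct (perp_len_val nj nk ljk Uj Uk Fk4 Fk6 Pjk) as [Ejk d1].
  destruct (perp_len_val ni nj lij Ui Uj Fk1 Fk3 Pij) as [Eij e1].
  fold a in Eki, a1. fold b in Eil, b1. fold c in Elj, c1. fold d in Ejk, d1. fold e in Eij, e1.
  destruct Pij as (P0 & _ & _ & HP0 & _).
  destruct Pjk as (_ & Qk & _ & _ & HQk & _).
  destruct Pil as (_ & Ql & _ & _ & HQl & _).
  unfold geod_perp in Pmi, Pmj.
  set (E := e^2 - 1).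
  assert (hE : 0 < E) by (unfold E; simpl; nra).
  assert (G : forall x y, (1 - e^2) * mink x y = mink x ni * mink y ni + mink x nj * mink y nj
     + (1 - e^2) * mink x m * mink y m + e * (mink x ni * mink y nj + mink x nj * mink y ni)).
  { intros x y. pose proof (gram_special ni nj m x y 1 (-e) 1 1 Ui Eij Uj Um
      ltac:(rewrite mink_sym; auto) ltac:(rewrite mink_sym; auto)) as G. lra. }
  set (mk := mink nk m). set (ml := mink nl m).
  assert (Ik : (1 - e^2) = a^2 + d^2 + (1-e^2)*mk^2 + 2*e*a*d).
  { pose proof (G nk nk) as H. rewrite Uk, Eki, (mink_sym nk nj), Ejk in H. fold mk in H. simpl. lra. }
  assert (Il : (1 - e^2) = b^2 + c^2 + (1-e^2)*ml^2 + 2*e*b*c).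
  { pose proof (G nl nl) as H. rewrite Ul, (mink_sym nl ni), Eil, Elj in H. fold ml in H. simpl. lra. }
  assert (mk_neg : mk < 0).
  { pose proof (G Qk nk) as H. rewrite Eki, (mink_sym nk nj), Ejk in H. fold mk in H.
    destruct HQk as [HQk0 HQk1]. rewrite HQk1 in H.
    assert (0 < mink Qk ni) by (apply Fk2; split; auto).
    assert (0 < mink Qk nj) by (apply Fk4; split; auto).
    assert (0 < mink Qk m) by (apply Hmk; split; auto).
    destruct (Rlt_dec mk 0); auto. exfalso.
    assert (0 <= E * mink Qk m * mk) by (apply Rmult_le_pos; [apply Rmult_le_pos|]; lra).
    assert (0 < mink Qk ni * a + mink Qk nj * d + e*(mink Qk ni * d + mink Qk nj * a)) by
      (assert (0 < mink Qk ni * a) by nra; assert (0 < mink Qk nj * d) by nra;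
       assert (0 < mink Qk ni * d) by nra; assert (0 < mink Qk nj * a) by nra; nra).
    unfold E in *. nra. }
  assert (ml_pos : 0 < ml).
  { pose proof (G Ql nl) as H. rewrite (mink_sym nl ni), Eil, Elj in H. fold ml in H.
    destruct HQl as [HQl0 HQl1]. rewrite HQl1 in H.
    assert (0 < mink Ql ni) by (apply Fl2; split; auto).
    assert (0 < mink Ql nj) by (apply Fl4; split; auto).
    assert (mink Ql m < 0) by (apply Hml; split; auto).
    destruct (Rlt_dec 0 ml); auto. exfalso.
    assert (0 <= E * (- mink Ql m) * (- ml)) by (apply Rmult_le_pos; [apply Rmult_le_pos|]; lra).
    assert (0 < mink Ql ni * b + mink Ql nj * c + e*(mink Ql ni * c + mink Ql nj * b)) by
      (assert (0 < mink Ql ni * b) by nra; assert (0 < mink Ql nj * c) by nra;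
       assert (0 < mink Ql ni * c) by nra; assert (0 < mink Ql nj * b) by nra; nra).
    unfold E in *. nra. }
  destruct Wk as (HOk & dki & dkj & dkk & Ski & Skj & Skk & Wk1 & Wk2).
  rewrite (signed_dist_sinh Ok ni dki HOk Ui Ski), (signed_dist_sinh Ok nj dkj HOk Uj Skj) in Wk1.
  rewrite (signed_dist_sinh Ok nj dkj HOk Uj Skj), (signed_dist_sinh Ok nk dkk HOk Uk Skk) in Wk2.
  destruct Wl as (HOl & dli & dlj & dll & Sli & Slj & Sll & Wl1 & Wl2).
  rewrite (signed_dist_sinh Ol ni dli HOl Ui Sli), (signed_dist_sinh Ol nj dlj HOl Uj Slj) in Wl1.
  rewrite (signed_dist_sinh Ol nj dlj HOl Uj Slj), (signed_dist_sinh Ol nl dll HOl Ul Sll) in Wl2.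
  pose proof (wc_pos Ok ni nj P0 ri rj Ui Uj Fk1 Fk3 HP0 HOk hri hrj Wk1) as tk_pos.
  pose proof (wc_pos Ol ni nj P0 ri rj Ui Uj Fk1 Fk3 HP0 HOl hri hrj Wl1) as tl_pos.
  destruct (center_alg Ok nk ni nj m e ri rj rk a d mk (ri * mink Ok ni) G HOk hri hrj hrk e1
     Eki ltac:(rewrite mink_sym; auto) eq_refl ltac:(lra) eq_refl (eq_sym Wk1) (eq_sym (eq_trans Wk1 Wk2)))
     as [gk Tk].
  destruct (center_alg Ol nl ni nj m e ri rj rl b c ml (ri * mink Ol ni) G HOl hri hrj hrl e1
     ltac:(rewrite mink_sym; auto) Elj eq_refl ltac:(lra) eq_refl (eq_sym Wl1) (eq_sym (eq_trans Wl1 Wl2)))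
     as [gl Tl].
  fold E in gk, Tk, gl, Tl.
  set (Lk := E / rk - (a + e * d) / ri - (d + e * a) / rj) in *.
  set (Ll := E / rl - (b + e * c) / ri - (c + e * b) / rj) in *.
  set (kap := (/ ri ^ 2 + / rj ^ 2 + 2 * e / (ri * rj)) / E) in *.
  set (tk := ri * mink Ok ni) in *. set (tl := ri * mink Ol ni) in *.
  assert (Del : local_weighted_delaunay m Ok Ol <-> mink Ol m <= mink Ok m).
  { assert (Up : unit_spacelike (popp m)) by (unfold unit_spacelike in *; destruct m; unfold mink, popp in *; simpl in *; lra).
    split.
    - intros (hk & hl & Sk & Sl & H0).
      rewrite <- (signed_dist_sinh Ok m hk HOk Um Sk).
      pose proof (signed_dist_sinh Ol (popp m) hl HOl Up Sl) as X. rewrite mink_popp_r in X.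
      assert (Hs : sinh (-hl) <= sinh hk) by (apply sinh_le; lra). rewrite sinh_opp in Hs. lra.
    - intro H0. destruct (signed_dist_ex Ok m HOk Um) as [hk Sk].
      destruct (signed_dist_ex Ol (popp m) HOl Up) as [hl Sl].
      exists hk, hl. split; auto. split; auto.
      pose proof (signed_dist_sinh Ok m hk HOk Um Sk) as X1.
      pose proof (signed_dist_sinh Ol (popp m) hl HOl Up Sl) as X2. rewrite mink_popp_r in X2.
      assert (Hs : sinh (-hl) <= sinh hk) by (rewrite sinh_opp; lra). apply (proj1 (sinh_le _ _)) in Hs. lra. }
  rewrite Del, gk, gl.
  rewrite (mono_iff tk tl _ _ kap tk_pos tl_pos Tk Tl).
  set (S := sqrt E).
  assert (SS : S * S = E) by (apply sqrt_sqrt; lra).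
  assert (S0 : 0 < S) by (apply sqrt_lt_R0; lra).
  rewrite (final_alg E S mk ml Lk Ll hE S0 mk_neg ml_pos).
  set (A := - mk * S). set (B := ml * S).
  assert (A0 : 0 <= A) by (unfold A; nra).
  assert (B0 : 0 <= B) by (unfold B; nra).
  assert (HA2 : A^2 = a^2 + d^2 + e^2 + 2*a*d*e - 1).
  { replace (A^2) with (mk^2 * (S*S)) by (unfold A; ring). rewrite SS. unfold E. lra. }
  assert (HB2 : B^2 = b^2 + c^2 + e^2 + 2*b*c*e - 1).
  { replace (B^2) with (ml^2 * (S*S)) by (unfold B; ring). rewrite SS. unfold E. lra. }
  assert (HA : sqrt (DeltaXYZ a d e) = A).
  { unfold DeltaXYZ. rewrite <- HA2. apply sqrt_pow2; auto. }
  assert (HB : sqrt (DeltaXYZ b c e) = B).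
  { unfold DeltaXYZ. rewrite <- HB2. apply sqrt_pow2; auto. }
  unfold f, p, q, r, s. rewrite HA, HB. fold E.
  set (F := a * b + c * d + a * c * e + b * d * e + A * B).
  set (C := (B*(a+e*d) + A*(b+e*c))/E).
  set (D := (B*(d+e*a) + A*(c+e*b))/E).
  assert (HC : sqrt (DeltaXYZ c d (F/E)) = C).
  { assert (key : E^2*(c^2+d^2-1) + F^2 + 2*c*d*F*E - (B*(a+e*d)+A*(b+e*c))^2 = 0).
    { transitivity ((B^2 - (b+e*c)^2)*(A^2 - (a^2 + d^2 + e^2 + 2*a*d*e - 1))
         + ((a^2 + d^2 + e^2 + 2*a*d*e - 1) - (a+e*d)^2)*(B^2 - (b^2 + c^2 + e^2 + 2*b*c*e - 1))).
      - unfold F, E. ring.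
      - rewrite HA2, HB2. ring. }
    assert (X : DeltaXYZ c d (F/E) - C^2 = (E^2*(c^2+d^2-1) + F^2 + 2*c*d*F*E - (B*(a+e*d)+A*(b+e*c))^2)/E^2).
    { unfold DeltaXYZ, C. field. lra. }
    rewrite key in X. replace (DeltaXYZ c d (F/E)) with (C^2) by (unfold Rdiv at 2 in X; lra).
    apply sqrt_pow2. unfold C. unfold Rdiv; apply Rmult_le_pos; [|left; apply Rinv_0_lt_compat; lra].
    apply Rplus_le_le_0_compat; apply Rmult_le_pos; nra. }
  assert (HD : sqrt (DeltaXYZ a b (F/E)) = D).
  { assert (key : E^2*(a^2+b^2-1) + F^2 + 2*a*b*F*E - (B*(d+e*a)+A*(c+e*b))^2 = 0).
    { transitivity ((B^2 - (c+e*b)^2)*(A^2 - (a^2 + d^2 + e^2 + 2*a*d*e - 1))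
         + ((a^2 + d^2 + e^2 + 2*a*d*e - 1) - (d+e*a)^2)*(B^2 - (b^2 + c^2 + e^2 + 2*b*c*e - 1))).
      - unfold F, E. ring.
      - rewrite HA2, HB2. ring. }
    assert (X : DeltaXYZ a b (F/E) - D^2 = (E^2*(a^2+b^2-1) + F^2 + 2*a*b*F*E - (B*(d+e*a)+A*(c+e*b))^2)/E^2).
    { unfold DeltaXYZ, D. field. lra. }
    rewrite key in X. replace (DeltaXYZ a b (F/E)) with (D^2) by (unfold Rdiv at 2 in X; lra).
    apply sqrt_pow2. unfold D. unfold Rdiv; apply Rmult_le_pos; [|left; apply Rinv_0_lt_compat; lra].
    apply Rplus_le_le_0_compat; apply Rmult_le_pos; nra. }
  rewrite HC, HD.
  assert (Id : B * Lk + A * Ll = E * (B / rk + A / rl - (C / ri + D / rj))).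
  { unfold Lk, Ll, C, D, A, B. field. repeat split; lra. }
  rewrite Id. split; intro h.
  - destruct (Rle_dec (B / rk + A / rl) (C / ri + D / rj)); auto. exfalso.
    assert (0 < E * (B / rk + A / rl - (C / ri + D / rj))) by (apply Rmult_lt_0_compat; lra). lra.
  - assert (0 <= E * ((C / ri + D / rj) - (B / rk + A / rl))) by (apply Rmult_le_pos; lra). lra.
Qed.
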